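(* Let $G$ be a connected graph with vertex set $V(G)=\{u_1,\dots,u_n\}$, $n\ge 2$, let $U_1,\dots,U_k$ be the non-singleton true twin equivalence classes of $G$, and let $\mathcal{H}=\{H_1,\dots,H_n\}$ be a family of graphs. Then $$\dim_l(G\circ\mathcal{H})=\sum_{i=1}^{n}\operatorname{adim}_l(H_i)+\sum_{j:\,I\cap U_j\ne\emptyset}\big(|I\cap U_j|-1\big)+\varrho(G,\mathcal{H}).$$
   Context: All graphs are finite and simple with at least one vertex. $d_G$ is the shortest-path distance ($d_G(x,y)=+\infty$ if $x,y$ lie in different components), and $d_{G,2}(x,y)=\min\{d_G(x,y),2\}$. A vertex $s$ distinguishes $x,y$ (with respect to a distance $d$) if $d(s,x)\ne d(s,y)$. For a connected graph $G$, a set $S\subseteq V(G)$ is a local metric generator if every two adjacent vertices of $G$ are distinguished w.r.t. $d_G$ by some vertex of $S$; $\dim_l(G)$ is the minimum size of such a set. A set $S\subseteq V(H)$ is a local adjacency generator of a graph $H$ if every two adjacent vertices of $H$ are distinguished w.r.t. $d_{H,2}$ by some vertex of $S$ (equivalently, for any adjacent $x,y\notin S$ some $s\in S$ is adjacent to exactly one of them); $\operatorname{adim}_l(H)$ is the minimum size of such a set, and a minimum one is a local adjacency basis. $\Phi$ denotes the class of empty (edgeless) graphs. $\mathcal{G}$ denotes the class of graphs $H$ such that for every local adjacency basis $B$ of $H$ there is $v\in V(H)$ with $B\subseteq N_H(v)$ (open neighbourhood). Vertices $x,y$ are true twins if $N[x]=N[y]$; this is an equivalence relation. The lexicographic product $G\circ\mathcal{H}$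 has vertex set $\bigcup_i \{u_i\}\times V(H_i)$, with $(u_i,v)\sim(u_j,w)$ iff $u_iu_j\in E(G)$, or $i=j$ and $vw\in E(H_i)$. Notation: $T(G)=\bigcup_{j}U_j$; $V_E=\{u_i\in V(G)-T(G): H_i\in\Phi\}$; $I=\{u_i\in V(G): H_i\in\mathcal{G}\}$; for each $j$ with $I\cap U_j\neq\emptyset$ choose (arbitrarily) one vertex of $I\cap U_j$ and let $I'_j$ be the set of the remaining vertices of $I\cap U_j$ ($I'_j=\emptyset$ otherwise); $X_E=I-\bigcup_j I'_j$. Two vertices $u_i,u_j\in X_E$ satisfy relation $\mathcal{R}$ iff $u_i\sim u_j$ and $d_G(u,u_i)=d_G(u,u_j)$ for all $u\in V(G)-(V_E\cup\{u_i,u_j\})$. $\varrho(G,\mathcal{H})$ is the minimum of $|A|$ over sets $A\subseteq X_E$ such that every pair $u_i,u_j\in X_E$ satisfying $\mathcal{R}$ is distinguished (w.r.t. $d_G$) by some vertex of $A$. *)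

(* Defs.v *)
(* finite simple graphs as symmetric irreflexive relations
   on a finType. *)
From mathcomp Require Import all_boot.

Set Implicit Arguments.
Unset Strict Implicit.
Unset Printing Implicit Defensive.

Section GraphDefs.
Variables (T : finType) (e : rel T).

Fixpoint walk (k : nat) (x y : T) : bool :=
  if k is k'.+1 then [exists z, e x z && walk k' z y] else x == y.

(* shortest-path distance; None encodes +infinity (different components).
   A shortest walk is a path, of length < #|T|. *)
Definition dist (x y : T) : option nat :=
  let k := find (fun k => walk k x y) (iota 0 #|T|) in
  if k < #|T| then Some k else None.

Definition dist2 (x y : T) : nat :=
  if dist x y is Some k then minn k 2 else 2.

Definition connected : Prop := forall x y : T, dist x y != None.

(* minimum cardinality of a set satisfying P (the full set always
   satisfies the properties used below, so the default #|T| is harmless) *)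
Definition min_card (P : pred {set T}) : nat :=
  \big[minn/#|T|]_(S : {set T} | P S) #|S|.

Definition local_metric_gen (S : {set T}) : bool :=
  [forall x, forall y, e x y ==> [exists s in S, dist s x != dist s y]].

Definition ldim : nat := min_card local_metric_gen.

Definition local_adj_gen (S : {set T}) : bool :=
  [forall x, forall y, e x y ==> [exists s in S, dist2 s x != dist2 s y]].

Definition ladim : nat := min_card local_adj_gen.

Definition local_adj_basis (B : {set T}) : bool :=
  local_adj_gen B && (#|B| == ladim).

Definition nbhd (v : T) : {set T} := [set w | e v w].

Definition in_classG : bool :=
  [forall B : {set T}, local_adj_basis B ==> [exists v, B \subset nbhd v]].

Definition edgeless : bool := [forall x, forall y, ~~ e x y].

Definition true_twin (x y : T) : bool :=
  [forall z, ((z == x) || e x z) == ((z == y) || e y z)].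

Definition twin_class (x : T) : {set T} := [set y | true_twin x y].

Definition nstwin_classes : {set {set T}} :=
  [set twin_class x | x in [pred x | 1 < #|twin_class x|]].

Definition TG : {set T} := \bigcup_(U in nstwin_classes) U.

End GraphDefs.

Section LexProd.
Variables (VG : finType) (eG : rel VG) (H : VG -> finType)
          (eH : forall i, rel (H i)).

Definition lexprod : rel {i : VG & H i} :=
  fun x y => eG (tag x) (tag y) ||
             ((tag x == tag y) && @eH (tag x) (tagged x) (tagged_as x y)).

Definition VE : {set VG} :=
  [set u | (u \notin TG eG) && edgeless (@eH u)].

Definition Iset : {set VG} := [set u | in_classG (@eH u)].

(* X_E = I - \bigcup_j I'_j, where rep U is the chosen vertex of I \cap U *)
Definition XE_of (rep : {set VG} -> VG) : {set VG} :=
  Iset :\: \bigcup_(U in nstwin_classes eG | Iset :&: U != set0)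
              ((Iset :&: U) :\ rep U).

Definition relR (XE : {set VG}) (u v : VG) : bool :=
  [&& u \in XE, v \in XE, eG u v &
      [forall w, (w \notin VE :|: [set u; v]) ==>
                 (dist eG w u == dist eG w v)]].

Definition rho (XE : {set VG}) : nat :=
  min_card [pred A : {set VG} | (A \subset XE) &&
    [forall u, forall v, relR XE u v ==>
        [exists s in A, dist eG s u != dist eG s v]]].

End LexProd.

(* Main.v *)
Require Import Defs.
From mathcomp Require Import all_boot.

Set Implicit Arguments.
Unset Strict Implicit.
Unset Printing Implicit Defensive.

Section Generic.
Variables (T : finType) (e : rel T).

Lemma walk_last k x z :
  walk e k.+1 x z = [exists y, walk e k x y && e y z].
Proof.
elim: k x => [|k IH] x.
  apply/existsP/existsP => /= [[y /andP[exy /eqP <-]]|[y /andP[/eqP <- exy]]].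
    by exists x; rewrite /= eqxx exy.
  by exists z; rewrite exy eqxx.
change (walk e k.+2 x z) with [exists y, e x y && walk e k.+1 y z].
apply/existsP/existsP.
  move=> [y /andP[exy]]; rewrite IH => /existsP[y' /andP[w ey'z]].
  by exists y'; rewrite ey'z andbT /=; apply/existsP; exists y; rewrite exy.
move=> [y' /andP[/existsP[y /andP[exy w]] ey'z]].
exists y; rewrite exy IH; apply/existsP; exists y'; rewrite ey'z andbT; exact: w.
Qed.

Lemma walk_cat i j x y z : walk e i x y -> walk e j y z -> walk e (i + j) x z.
Proof.
elim: i x => [|i IH] x /=; first by move/eqP->.
move=> /existsP[w /andP[exw wy]] yz; apply/existsP; exists w.
by rewrite exw (IH _ wy yz).
Qed.

Lemma dist_SomeP x y k : dist e x y = Some k ->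
  [/\ walk e k x y, k < #|T| & forall j, j < k -> ~~ walk e j x y].
Proof.
rewrite /dist; set k0 := find _ _; case: ifP => // lt [<-].
have hs : has (fun k => walk e k x y) (iota 0 #|T|) by rewrite has_find size_iota.
split => //.
  by have := nth_find 0 hs; rewrite -/k0 nth_iota.
move=> j ljk; have := before_find 0 ljk; rewrite nth_iota ?add0n ?(ltn_trans ljk) //.
by move=> ->.
Qed.

Lemma dist_minP x y j : walk e j x y -> j < #|T| ->
  exists k, dist e x y = Some k /\ k <= j.
Proof.
move=> w lj; rewrite /dist; set k0 := find _ _.
have kj : k0 <= j.
  rewrite leqNgt; apply/negP => /(before_find 0); rewrite nth_iota // add0n.
  by rewrite w.
by exists k0; rewrite (leq_ltn_trans kj lj).
Qed.

Lemma dist_eqP x y k : walk e k x y -> k < #|T| ->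
  (forall j, j < k -> ~~ walk e j x y) -> dist e x y = Some k.
Proof.
move=> w lk mn; have [k' [d k'k]] := dist_minP w lk.
have [w' _ _] := dist_SomeP d.
case: (ltnP k' k) => [/mn|kk']; first by rewrite w'.
have -> : k = k' by apply/eqP; rewrite eqn_leq k'k kk'.
exact: d.
Qed.

Lemma dist_le x y k j : dist e x y = Some k -> walk e j x y -> k <= j.
Proof.
move=> /dist_SomeP[_ _ mn] w; rewrite leqNgt; apply/negP => /mn.
by rewrite w.
Qed.

Lemma dist_refl x : dist e x x = Some 0.
Proof.
apply: dist_eqP => //=; by apply/card_gt0P; exists x.
Qed.

Lemma dist0 x y : dist e x y = Some 0 -> x = y.
Proof. by move/dist_SomeP=> [/= /eqP]. Qed.

Hypothesis eirr : irreflexive e.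
Hypothesis esym : symmetric e.

Lemma dist1 x y : (dist e x y == Some 1) = e x y.
Proof.
apply/eqP/idP.
  by move/dist_SomeP=> [/existsP[z /andP[xz /eqP <-]]].
move=> xy; have nxy : x != y by apply: contraTneq xy => ->; rewrite eirr.
apply: dist_eqP.
- by apply/existsP; exists y; rewrite xy eqxx.
- by have := max_card [set x; y]; rewrite cards2 nxy.
- by case=> // _ /=; rewrite nxy.
Qed.

Lemma dist2_val x y :
  dist2 e x y = if x == y then 0 else if e x y then 1 else 2.
Proof.
rewrite /dist2; case: eqP => [->|nxy]; first by rewrite dist_refl.
case: ifP => [xy|nxy']; first by move/eqP: (dist1 x y); rewrite xy => ->.
case d: (dist e x y) => [k|] //.
case: k d => [/dist0 //|[|k]] d.
  by move/eqP: d; rewrite dist1 nxy'.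
by rewrite minnE subKn.
Qed.

End Generic.

Set Implicit Arguments.
Unset Strict Implicit.
Unset Printing Implicit Defensive.

Section Twins.
Variables (T : finType) (e : rel T).
Hypothesis eirr : irreflexive e.
Hypothesis esym : symmetric e.

Lemma twinP x y :
  reflect (forall z, (z == x) || e x z = (z == y) || e y z) (true_twin e x y).
Proof. by apply: (iffP forallP) => h z; [apply/eqP|apply/eqP]. Qed.

Lemma twin_refl x : true_twin e x x.
Proof. by apply/twinP. Qed.

Lemma twin_sym x y : true_twin e x y -> true_twin e y x.
Proof. by move/twinP=> h; apply/twinP=> z; rewrite h. Qed.

Lemma twin_trans x y z : true_twin e x y -> true_twin e y z -> true_twin e x z.
Proof. by move/twinP=> h1 /twinP h2; apply/twinP=> w; rewrite h1 h2. Qed.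

Lemma twin_adj x y : true_twin e x y -> x != y -> e x y.
Proof.
move/twinP=> h nxy; have := h y; rewrite eqxx /= eq_sym (negbTE nxy) /=.
by move=> ->.
Qed.

Lemma twin_nb x y z : true_twin e x y -> z != x -> z != y -> e x z = e y z.
Proof. by move/twinP=> h zx zy; have := h z; rewrite (negbTE zx) (negbTE zy). Qed.

Lemma twin_dist_le x y w k l : true_twin e x y -> w != x -> w != y ->
  dist e w x = Some k -> dist e w y = Some l -> l <= k.
Proof.
move=> tw wx wy dx dy; have [wk _ _] := dist_SomeP dx.
case: k wk dx => [/= /eqP wxe|k]; first by rewrite wxe eqxx in wx.
rewrite walk_last => /existsP[p /andP[wp epx]] _.
case: (eqVneq p y) => [pe|npy].
  by rewrite pe in wp; apply: leq_trans (dist_le dy wp) _.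
apply: (dist_le dy); rewrite walk_last; apply/existsP; exists p; rewrite wp /=.
have npx : p != x by apply: contraTneq epx => ->; rewrite eirr.
by rewrite esym -(twin_nb tw npx npy) esym.
Qed.

Lemma twin_dist x y w : connected e -> true_twin e x y -> w != x -> w != y ->
  dist e w x = dist e w y.
Proof.
move=> con tw wx wy.
case dx: (dist e w x) (con w x) => [k|] // _.
case dy: (dist e w y) (con w y) => [l|] // _.
have h1 := twin_dist_le tw wx wy dx dy.
have h2 := twin_dist_le (twin_sym tw) wy wx dy dx.
by congr Some; apply/eqP; rewrite eqn_leq h1 h2.
Qed.

Lemma in_twin_class x y : (y \in twin_class e x) = true_twin e x y.
Proof. by rewrite inE. Qed.

Lemma twin_class_eq x y : true_twin e x y -> twin_class e x = twin_class e y.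
Proof.
move=> tw; apply/setP=> z; rewrite !inE; apply/idP/idP.
  by apply: twin_trans; apply: twin_sym.
by apply: twin_trans.
Qed.

Lemma classesP U : reflect (exists2 x, U = twin_class e x & 1 < #|twin_class e x|)
  (U \in nstwin_classes e).
Proof.
apply: (iffP imsetP) => [[x]|[x -> h]]; last by exists x; rewrite ?inE.
by rewrite inE => h ->; exists x.
Qed.

Lemma classes_mem U x : U \in nstwin_classes e -> x \in U -> U = twin_class e x.
Proof.
move/classesP=> [y -> _]; rewrite in_twin_class => tw; exact: twin_class_eq.
Qed.

Lemma classes_twin U x y : U \in nstwin_classes e -> x \in U -> y \in U ->
  true_twin e x y.
Proof.
by move=> hU hx hy; rewrite -in_twin_class -(classes_mem hU hx).
Qed.

Lemma classes_disj U V : U \in nstwin_classes e -> V \in nstwin_classes e ->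
  U != V -> [disjoint U & V].
Proof.
move=> hU hV nUV; apply/pred0P => x /=; apply/negbTE; apply/negP=> /andP[xU xV].
by rewrite (classes_mem hU xU) (classes_mem hV xV) eqxx in nUV.
Qed.

Lemma TGP x : reflect (exists2 U, U \in nstwin_classes e & x \in U) (x \in TG e).
Proof. exact: bigcupP. Qed.

End Twins.

Lemma min_card_le (T : finType) (P : pred {set T}) S : P S -> min_card P <= #|S|.
Proof.
move=> PS; rewrite /min_card; elim: (index_enum _) (mem_index_enum S) => // a r IH.
rewrite inE big_cons => /predU1P[<-|Sr]; first by rewrite PS geq_minl.
by case: ifP => _; [rewrite geq_min IH ?orbT|exact: IH].
Qed.

Lemma min_card_ex (T : finType) (P : pred {set T}) : P setT ->
  exists2 S, P S & #|S| = min_card P.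
Proof.
move=> PT; rewrite /min_card.
apply: (big_ind (fun n => exists2 S, P S & #|S| = n)).
- by exists setT; rewrite ?cardsT.
- move=> m n [S1 P1 e1] [S2 P2 e2] /=; case: (leqP m n) => h.
    by exists S1.
  by exists S2.
- by move=> S PS; exists S.
Qed.

Lemma card_as_sum (T : finType) (A : {set T}) : #|A| = \sum_x (x \in A) :> nat.
Proof. by rewrite -sum1_card big_mkcond /=; apply: eq_bigr => x _; case: (x \in A). Qed.

Lemma card_bigcup_disj (I T : finType) (P : pred I) (F : I -> {set T}) :
  (forall i j, P i -> P j -> i != j -> [disjoint F i & F j]) ->
  #|\bigcup_(i | P i) F i| = \sum_(i | P i) #|F i|.
Proof.
move=> dis; rewrite card_as_sum; under [RHS]eq_bigr do rewrite card_as_sum.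
rewrite exchange_big /=; apply: eq_bigr => x _.
case: (boolP (x \in \bigcup_(i | P i) F i)) => [/bigcupP[i Pi xi]|nx].
  rewrite (bigD1 i) //= xi big1 // => j /andP[Pj nji].
  by rewrite (disjointFr (dis i j Pi Pj _) xi) // eq_sym.
rewrite big1 // => i Pi; apply/eqP; rewrite eqb0; apply: contra nx => xi.
by apply/bigcupP; exists i.
Qed.

Lemma card_sigma (I : finType) (H : I -> finType) (f : forall i, {set H i}) :
  #|[set x : {i : I & H i} | tagged x \in f (tag x)]| = \sum_i #|f i|.
Proof.
rewrite card_as_sum (partition_big (fun x => tag x) predT) //=.
apply: eq_bigr => i _.
have inj : injective (@Tagged I i H).
  by move=> a b /eqP; rewrite eq_Tagged /= => /eqP.
rewrite -(card_imset (f i) inj).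
rewrite card_as_sum big_mkcond /=; apply: eq_bigr => x _.
case: x => j a /=; case: (eqVneq j i) => [?|nji]; first subst j.
  rewrite inE /=; congr (nat_of_bool _); apply/idP/imsetP => [h|[b hb /eqP]].
    by exists a.
  by rewrite eq_Tagged /= => /eqP ->.
case: imsetP => // [[b _ /eqP]]; rewrite -tag_eqE /tag_eq /= => /andP[]. 
by rewrite (negbTE nji).
Qed.

Unset Implicit Arguments.
Set Strict Implicit.


Unset Printing Implicit Defensive.

Lemma walk1 (T : finType) (e : rel T) x y : walk e 1 x y = e x y.
Proof.
apply/existsP/idP => [[z /andP[xz /eqP <-]] //|xy].
by exists y; rewrite xy eqxx.
Qed.

Lemma dist_two (T : finType) (e : rel T) x y z : irreflexive e ->
  x != y -> ~~ e x y -> e x z -> e z y -> dist e x y = Some 2.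
Proof.
move=> irr nxy nexy exz ezy.
have nzx : z != x by apply: contraTneq exz => ->; rewrite irr.
have nzy : z != y by apply: contraTneq ezy => ->; rewrite irr.
apply: dist_eqP.
- by change (walk e (1 + 1) x y); apply: (@walk_cat _ _ _ _ _ z); rewrite walk1.
- have := max_card (z |: [set x; y]).
  by rewrite cardsU1 cards2 nxy !inE negb_or nzx nzy.
- by move=> [|[|j]] // _; rewrite walk1.
Qed.

Section Product.
Variables (VG : finType) (eG : rel VG) (H : VG -> finType)
          (eH : forall i, rel (H i)).
Hypotheses (symG : symmetric eG) (irrG : irreflexive eG)
  (symH : forall i, symmetric (eH i)) (irrH : forall i, irreflexive (eH i))
  (neH : forall i, 0 < #|H i|) (card2 : 2 <= #|VG|) (conG : connected eG).

Local Notation P := {i : VG & H i}.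
Local Notation eP := (lexprod eG eH).
Local Notation Tg := (@Tagged VG _ H).

Lemma lex_same u (a b : H u) : eP (Tg a) (Tg b) = eH u a b.
Proof.
by rewrite /lexprod /= irrG eqxx /= (@tagged_asE _ _ (Tg a) b).
Qed.

Lemma lex_diff u v (a : H u) (b : H v) : u != v -> eP (Tg a) (Tg b) = eG u v.
Proof. by move=> nuv; rewrite /lexprod /= (negbTE nuv) orbF. Qed.

Lemma lex_sym : symmetric eP.
Proof.
case=> u a [v b]; case: (eqVneq u v) => [?|nuv]; first subst v.
  by rewrite !lex_same symH.
by rewrite !lex_diff // eq_sym.
Qed.

Lemma lex_irr : irreflexive eP.
Proof. by case=> u a; rewrite lex_same irrH. Qed.

Definition pt u : H u := enum_val (Ordinal (neH u)).

Lemma walk_proj j x y : walk eP j x y -> exists2 j', j' <= j & walk eG j' (tag x) (tag y).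
Proof.
elim: j x => [|j IH] x /=; first by move/eqP->; exists 0 => //=.
move=> /existsP[z /andP[xz /IH[j' jj w]]].
move: xz; rewrite /lexprod; case: (boolP (eG (tag x) (tag z))) => [exz _|_ /= /andP[/eqP exz _]].
  by exists j'.+1 => //; apply/existsP; exists (tag z); rewrite exz.
by exists j' => //; [apply: leqW | rewrite exz].
Qed.

Lemma walk_lift k w u (c : H w) (a : H u) : walk eG k.+1 w u -> walk eP k.+1 (Tg c) (Tg a).
Proof.
elim: k w c => [|k IH] w c.
  rewrite walk1 => ewu; rewrite walk1 lex_diff //.
  by apply: contraTneq ewu => ->; rewrite irrG.
move=> /existsP[z /andP[ewz wz]]; apply/existsP; exists (Tg (pt z)).
apply/andP; split; last exact: IH.
rewrite lex_diff //; by apply: contraTneq ewz => ->; rewrite irrG.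
Qed.

Lemma card_VG_P : #|VG| <= #|[set: P]|.
Proof.
have inj : injective (fun u => Tg (pt u)).
  by move=> u v /(congr1 tag).
by rewrite -cardsT -(card_imset setT inj) subset_leq_card // subsetT.
Qed.

Lemma dist_diff w u (c : H w) (a : H u) : w != u -> dist eP (Tg c) (Tg a) = dist eG w u.
Proof.
move=> nwu; case d: (dist eG w u) (conG w u) => [k|] // _.
have [wk lk mn] := dist_SomeP d.
case: k wk lk mn d => [/= /eqP wu|k]; first by rewrite wu eqxx in nwu.
move=> wk lk mn d; apply: dist_eqP.
- exact: walk_lift.
- by rewrite -cardsT; exact: leq_trans lk card_VG_P.
- move=> j lj; apply/negP => /walk_proj[j' jj /= w'].
  by have := mn j' (leq_ltn_trans jj lj); rewrite w'.
Qed.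

Lemma exists_nb u : exists v, eG u v.
Proof.
have : exists v, v != u.
  apply/existsP; rewrite -negb_forall; apply/negP => /forallP h.
  have : #|VG| <= 1.
    by rewrite -(cards1 u) subset_leq_card //; apply/subsetP => v _; rewrite inE; move/negPn: (h v).
  by rewrite leqNgt card2.
move=> [v nvu]; case d: (dist eG u v) (conG u v) => [k|] // _.
have [wk _ _] := dist_SomeP d.
case: k wk d => [/= /eqP uv|k]; first by rewrite uv eqxx in nvu.
by move=> /existsP[z /andP[uz _]] _; exists z.
Qed.

Lemma dist_same u (c a : H u) :
  dist eP (Tg c) (Tg a) = Some (if c == a then 0 else if eH u c a then 1 else 2).
Proof.
case: (eqVneq c a) => [->|nca]; first exact: dist_refl.
case: ifP => eca.
  by apply/eqP; rewrite dist1 ?lex_same //; exact: lex_irr.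
have [v euv] := exists_nb u.
have nuv : u != v by apply: contraTneq euv => ->; rewrite irrG.
apply: (@dist_two _ _ _ _ (Tg (pt v))) => //.
- exact: lex_irr.
- by rewrite eq_Tagged.
- by rewrite lex_same eca.
- by rewrite lex_diff.
- by rewrite lex_diff 1?eq_sym // symG.
Qed.

Lemma dist2_val' u (c a : H u) :
  dist2 (eH u) c a = if c == a then 0 else if eH u c a then 1 else 2.
Proof. exact: dist2_val. Qed.

End Product.

Set Implicit Arguments.
Unset Strict Implicit.
Set Implicit Arguments.
Unset Strict Implicit.

Lemma min_card_ex' (T : finType) (P : pred {set T}) S0 : P S0 ->
  exists2 S, P S & #|S| = min_card P.
Proof.
move=> PS0; have le0 := min_card_le PS0.
have : (min_card P = #|T|) \/ exists2 S, P S & #|S| = min_card P.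
  rewrite /min_card.
  apply: (big_ind (fun n => (n = #|T|) \/ exists2 S, P S & #|S| = n)).
  - by left.
  - move=> m n h1 h2 /=; case: (leqP m n) => h; [exact: h1 | exact: h2].
  - by move=> S PS; right; exists S.
case=> [hT|h]; last exact: h; exists S0 => //; by apply/eqP; rewrite eqn_leq le0 andbT hT max_card.
Qed.

Section GenH.
Variables (T : finType) (e : rel T).
Hypotheses (irr : irreflexive e) (sym : symmetric e) (ne : 0 < #|T|).

Definition bad (X : {set T}) := [exists a, X \subset nbhd e a].

Lemma setT_lmg : local_metric_gen e setT.
Proof.
apply/forallP=> x; apply/forallP=> y; apply/implyP=> xy.
apply/existsP; exists x; rewrite inE dist_refl /= eq_sym; apply/eqP=> /dist0 exy.
by rewrite exy irr in xy.
Qed.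

Lemma setT_lag : local_adj_gen e setT.
Proof.
apply/forallP=> x; apply/forallP=> y; apply/implyP=> xy.
apply/existsP; exists x; rewrite inE !dist2_val // eqxx.
case: (eqVneq x y) => [exy|_]; first by rewrite exy irr in xy.
by rewrite xy.
Qed.

Lemma lag_mono (X Y : {set T}) : X \subset Y -> local_adj_gen e X -> local_adj_gen e Y.
Proof.
move=> /subsetP sXY /forallP h; apply/forallP=> x; move/forallP: (h x) => h'.
apply/forallP=> y; apply/implyP=> xy; move/implyP: (h' y) => /(_ xy).
by move=> /existsP[s /andP[sX d]]; apply/existsP; exists s; rewrite sXY.
Qed.

Lemma lag_edge (X : {set T}) x y : local_adj_gen e X -> e x y ->
  exists2 s, s \in X & dist2 e s x != dist2 e s y.
Proof.
move=> /forallP/(_ x)/forallP/(_ y)/implyP h /h /existsP[s /andP[sX d]].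
by exists s.
Qed.

Lemma basis_ex : exists X, local_adj_gen e X && (#|X| == ladim e).
Proof.
have [X h1 h2] := @min_card_ex' _ _ _ setT_lag.
by exists X; rewrite h1 h2 /ladim eqxx.
Qed.

Lemma pick_pt : exists x : T, true.
Proof. by move/card_gt0P: ne => [x _]; exists x. Qed.

Lemma notbad_ne (X : {set T}) : ~~ bad X -> X != set0.
Proof.
apply: contra => /eqP ->; have [x _] := pick_pt.
by apply/existsP; exists x; rewrite sub0set.
Qed.

Lemma notbadP (X : {set T}) a : ~~ bad X -> exists2 c, c \in X & ~~ e a c.
Proof.
move=> nb; have : ~~ (X \subset nbhd e a).
  by apply: contra nb => h; apply/existsP; exists a.
by move/subsetPn=> [c cX]; rewrite inE => nac; exists c.
Qed.

Lemma badP (X : {set T}) : bad X -> exists a, forall c, c \in X -> e a c.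
Proof.
move=> /existsP[a /subsetP h]; exists a => c /h; by rewrite inE.
Qed.

Lemma edgeless_ladim : edgeless e -> ladim e = 0.
Proof.
move=> el; apply/eqP; rewrite -leqn0.
have : local_adj_gen e set0.
  apply/forallP=> x; apply/forallP=> y; apply/implyP=> xy.
  by move/forallP: el => /(_ x)/forallP/(_ y); rewrite xy.
by move/min_card_le; rewrite cards0.
Qed.

Lemma edgeless_inG : edgeless e -> in_classG e.
Proof.
move=> el; apply/forallP=> B; apply/implyP=> /andP[_].
rewrite edgeless_ladim // cards_eq0 => /eqP ->.
have [x _] := pick_pt; by apply/existsP; exists x; rewrite sub0set.
Qed.

Lemma edgeless_notbad (X : {set T}) : edgeless e -> X != set0 -> ~~ bad X.
Proof.
move=> el /set0Pn[x xX]; apply/negP => /badP[a /(_ x xX)].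
by move/forallP: el => /(_ a)/forallP/(_ x) /negbTE ->.
Qed.

Lemma good_ex : exists X, [&& local_adj_gen e X, ~~ bad X &
                          (#|X| == ladim e + in_classG e)].
Proof.
case: (boolP (in_classG e)) => hG.
  have [B /andP[gB /eqP cB]] := basis_ex.
  have /existsP[v sBv] : [exists v, B \subset nbhd e v].
    by move/forallP: hG => /(_ B)/implyP; apply; rewrite /local_adj_basis gB cB eqxx.
  have vB : v \notin B.
    by apply/negP => /(subsetP sBv); rewrite inE irr.
  have gX : local_adj_gen e (v |: B) by apply: (lag_mono _ gB); exact: subsetUr.
  exists (v |: B); rewrite gX /= cardsU1 vB cB addnC eqxx andbT.
  apply/negP => /badP[a ha].
  have eav : e a v by apply: ha; rewrite setU11.
  have hB : forall s, s \in B -> e a s /\ e v s.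
    move=> s sB; split; first by apply: ha; rewrite setU1r.
    by move/subsetP: sBv => /(_ s sB); rewrite inE.
  have [s sB] := lag_edge gB eav.
  have [eas evs] := hB s sB.
  rewrite !dist2_val //.
  have nsa : s != a by apply: contraTneq eas => ->; rewrite irr.
  have nsv : s != v by apply: contraTneq evs => ->; rewrite irr.
  by rewrite (negbTE nsa) (negbTE nsv) sym eas sym evs.
move: hG; rewrite negb_forall => /existsP[B]; rewrite negb_imply => /andP[/andP[gB /eqP cB] nb].
by exists B; rewrite gB cB addn0 eqxx andbT.
Qed.

End GenH.

Unset Implicit Arguments.
Set Strict Implicit.

Lemma walk_sym (T : finType) (e : rel T) : symmetric e ->
  forall k x y, walk e k x y = walk e k y x.
Proof.
move=> sym; elim=> [|k IH] x y; first by rewrite /= eq_sym.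
rewrite walk_last; apply/existsP/existsP => [[z /andP[xz zy]]|[z /andP[yz zx]]].
  exists z; apply/andP; split; first by rewrite sym.
  change (walk e k z x); rewrite IH; exact: xz.
exists z; apply/andP; split; last by rewrite sym.
change (walk e k x z); rewrite IH; exact: zx.
Qed.

Lemma dist_sym (T : finType) (e : rel T) : symmetric e ->
  forall x y, dist e x y = dist e y x.
Proof.
move=> sym x y; rewrite /dist.
have -> : find (fun k => walk e k x y) (iota 0 #|T|) =
          find (fun k => walk e k y x) (iota 0 #|T|).
  by apply: eq_find => k; rewrite walk_sym.
by [].
Qed.

Section Main.
Variables (VG : finType) (eG : rel VG) (H : VG -> finType)
          (eH : forall i, rel (H i)) (rep : {set VG} -> VG).
Hypotheses (symG : symmetric eG) (irrG : irreflexive eG)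
  (symH : forall i, symmetric (eH i)) (irrH : forall i, irreflexive (eH i))
  (neH : forall i, 0 < #|H i|) (card2 : 2 <= #|VG|) (conG : connected eG)
  (hrep : forall U, U \in nstwin_classes eG -> Iset eH :&: U != set0 ->
     rep U \in Iset eH :&: U).

Local Notation P := {i : VG & H i}.
Local Notation eP := (lexprod eG eH).
Local Notation Tg := (@Tagged VG _ H).
Local Notation I := (Iset eH).
Local Notation C := (nstwin_classes eG).
Local Notation XE := (XE_of eG eH rep).

Lemma lexD u v (a : H u) (b : H v) : u != v -> eP (Tg a) (Tg b) = eG u v.
Proof. by move=> ?; apply: lex_diff. Qed.

Lemma lexS u (a b : H u) : eP (Tg a) (Tg b) = eH u a b.
Proof. by apply: lex_same. Qed.

Lemma eP_irr : irreflexive eP.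
Proof. by apply: lex_irr. Qed.

Lemma eP_sym : symmetric eP.
Proof. by apply: lex_sym. Qed.

Lemma distD w u (c : H w) (a : H u) : w != u -> dist eP (Tg c) (Tg a) = dist eG w u.
Proof. by move=> ?; apply: dist_diff. Qed.

Lemma distS u (c a : H u) :
  dist eP (Tg c) (Tg a) = Some (if c == a then 0 else if eH u c a then 1 else 2).
Proof. by apply: dist_same. Qed.

Lemma dist2S u (c a : H u) :
  dist2 (eH u) c a = if c == a then 0 else if eH u c a then 1 else 2.
Proof. by apply: dist2_val. Qed.

Lemma distP1 (x y : P) : eP x y -> dist eP x y = Some 1.
Proof. by move=> h; apply/eqP; rewrite dist1 //; exact: eP_irr. Qed.

Lemma distG1 (x y : VG) : eG x y -> dist eG x y = Some 1.
Proof. by move=> h; apply/eqP; rewrite dist1. Qed.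

Lemma twinD x y w : true_twin eG x y -> w != x -> w != y -> dist eG w x = dist eG w y.
Proof. by move=> *; apply: twin_dist. Qed.

Lemma twin_TG x y : true_twin eG x y -> x != y -> x \in TG eG.
Proof.
move=> tw nxy; apply/bigcupP; exists (twin_class eG x); last by rewrite inE twin_refl.
apply/imsetP; exists x => //; rewrite inE.
have := subset_leq_card (_ : [set x; y] \subset twin_class eG x).
rewrite cards2 nxy; apply; apply/subsetP => z; rewrite !inE => /orP[] /eqP ->.
  exact: twin_refl.
exact: tw.
Qed.

Lemma classTG x : x \in TG eG -> twin_class eG x \in C.
Proof. by move=> /bigcupP[U hU xU]; rewrite -(classes_mem hU xU). Qed.

Lemma TG_twin x : x \in TG eG -> exists2 y, true_twin eG x y & y != x.
Proof.
move=> /classTG /classesP[z ez hz]; rewrite -ez in hz.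
have : 0 < #|twin_class eG x :\ x|.
  by move: hz; rewrite (cardsD1 x) inE twin_refl.
move/card_gt0P=> [y]; rewrite !inE => /andP[nyx tw]; by exists y.
Qed.

Arguments twinD [x y w]. Arguments twin_TG [x y]. Arguments distP1 [x y].
Arguments distG1 [x y]. Arguments TG_twin [x]. Arguments classTG [x].
Definition Nset := \bigcup_(U in C | I :&: U != set0) ((I :&: U) :\ rep U).

Lemma XE_eq : XE = I :\: Nset.
Proof. by []. Qed.

Lemma NsetE x : (x \in Nset) = [&& x \in I, x \in TG eG & x != rep (twin_class eG x)].
Proof.
apply/bigcupP/idP => [[U /andP[hU _]]|/and3P[xI xT nr]].
  rewrite !inE => /andP[nxr /andP[xI xU]].
  rewrite xI /= -(classes_mem hU xU) nxr andbT.
  by apply/bigcupP; exists U.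
move: xI; rewrite inE => xI.
exists (twin_class eG x); last by rewrite !inE nr xI twin_refl.
rewrite classTG //=; apply/set0Pn; exists x; by rewrite !inE xI twin_refl.
Qed.

Lemma repP x : x \in I -> x \in TG eG -> rep (twin_class eG x) \in I :&: twin_class eG x.
Proof.
move=> xI xT; apply: hrep; first exact: classTG.
by apply/set0Pn; exists x; rewrite in_setI xI inE twin_refl.
Qed.

Lemma XE_twin_eq u v : u \in XE -> v \in XE -> true_twin eG u v -> u = v.
Proof.
rewrite XE_eq !in_setD !NsetE => /andP[hu uI] /andP[hv vI] tw.
case: (eqVneq u v) => // nuv.
have uT := twin_TG tw nuv.
have vT : v \in TG eG by apply: (twin_TG (twin_sym tw)); rewrite eq_sym.
move: hu hv; rewrite uI vI uT vT /= !negbK => /eqP -> /eqP ->.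
by rewrite (twin_class_eq tw).
Qed.

Lemma sumN : \sum_(U in C | I :&: U != set0) (#|I :&: U| - 1) = #|Nset|.
Proof.
rewrite /Nset card_bigcup_disj.
  apply: eq_bigr => U /andP[hU ne].
  by have := cardsD1 (rep U) (I :&: U); rewrite hrep // add1n => ->; rewrite subn1.
move=> U V /andP[hU _] /andP[hV _] nUV.
apply: (disjointW _ _ (classes_disj hU hV nUV)).
  by apply/subsetP => x; rewrite !inE => /and3P[].
by apply/subsetP => x; rewrite !inE => /and3P[].
Qed.

Definition Sec (S : {set P}) u : {set H u} := [set c | Tg c \in S].

Lemma card_Sec (S : {set P}) : #|S| = \sum_u #|Sec S u|.
Proof.
rewrite -card_sigma; apply: eq_card => -[u a]; by rewrite !inE.
Qed.

Lemma gen_sec (S : {set P}) u : local_metric_gen eP S -> local_adj_gen (eH u) (Sec S u).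
Proof.
move=> gS; apply/forallP=> a; apply/forallP=> b; apply/implyP=> ab.
move/forallP: gS => /(_ (Tg a))/forallP/(_ (Tg b))/implyP; rewrite lexS => /(_ ab).
move=> /existsP[[w c] /andP[sS d]].
case: (eqVneq w u) => [ewu|nwu]; last by rewrite !distD ?eqxx in d.
subst w; apply/existsP; exists c; rewrite inE sS /= !dist2S.
by rewrite !distS in d; apply: contra d => /eqP ->.
Qed.

Lemma gen_edge (S : {set P}) u v (a : H u) (b : H v) :
  local_metric_gen eP S -> eG u v ->
  [\/ exists2 c, c \in Sec S u & ~~ eH u a c,
      exists2 c, c \in Sec S v & ~~ eH v b c |
      exists w, [/\ w != u, w != v, Sec S w != set0 & dist eG w u != dist eG w v]].
Proof.
move=> gS euv.
have nuv : u != v by apply: contraTneq euv => ->; rewrite irrG.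
move/forallP: gS => /(_ (Tg a))/forallP/(_ (Tg b))/implyP; rewrite lexD // => /(_ euv).
move=> /existsP[[w c] /andP[sS d]].
case: (eqVneq w u) => [ewu|nwu].
  subst w; apply: Or31; exists c; first by rewrite inE.
  apply: contra d => eac.
  have ecb : eP (Tg c) (Tg b) by rewrite lexD.
  rewrite (distP1 ecb) distS.
  have nca : c != a by apply: contraTneq eac => ->; rewrite irrH.
  by rewrite (negbTE nca) symH eac.
case: (eqVneq w v) => [ewv|nwv].
  subst w; apply: Or32; exists c; first by rewrite inE.
  apply: contra d => ebc.
  have eca : eP (Tg c) (Tg a) by rewrite lexD 1?eq_sym // symG.
  rewrite (distP1 eca) distS.
  have ncb : c != b by apply: contraTneq ebc => ->; rewrite irrH.
  by rewrite (negbTE ncb) symH ebc.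
apply: Or33; exists w; split => //; first by apply/set0Pn; exists c; rewrite inE.
by rewrite !distD in d.
Qed.

Definition Q (S : {set P}) : {set VG} := [set u | ~~ bad (eH u) (Sec S u)].

Lemma twinQ (S : {set P}) x y : local_metric_gen eP S -> true_twin eG x y -> x != y ->
  (x \in Q S) || (y \in Q S).
Proof.
move=> gS tw nxy; apply/negPn/negP; rewrite negb_or !inE !negbK => /andP[/badP[a ha] /badP[b hb]].
have [[c cS /negP[]]|[c cS /negP[]]|[w [wx wy _ d]]] := gen_edge S x y a b gS (twin_adj tw nxy).
- exact: ha.
- exact: hb.
by rewrite (twinD tw wx wy) eqxx in d.
Qed.

Arguments repP [x]. Arguments XE_twin_eq [u v].

Lemma Nset_I x : x \in Nset -> x \in I.
Proof. by rewrite NsetE => /and3P[]. Qed.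

Lemma XE_I x : x \in XE -> x \in I.
Proof. by rewrite XE_eq inE => /andP[]. Qed.

Lemma XE_notN x : x \in XE -> x \notin Nset.
Proof. by rewrite XE_eq inE => /andP[]. Qed.

Arguments twinQ [S x y]. Arguments gen_edge [S u v]. Arguments gen_sec [S].
Arguments Nset_I [x]. Arguments XE_I [x]. Arguments XE_notN [x].

Definition Aset (S : {set P}) : {set VG} :=
  [set x in XE | (x \in Q S) &&
     [forall y, ((y \in Nset) && true_twin eG x y) ==> (y \in Q S)]].

Lemma lower_count (S : {set P}) : local_metric_gen eP S ->
  #|Nset| + #|Aset S| <= #|Q S :&: I|.
Proof.
move=> gS.
pose phi x := if x \in Q S then x else rep (twin_class eG x).
have AQ : forall x, x \in Aset S -> x \in Q S.
  by move=> x; rewrite inE => /and3P[].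
have AXE : forall x, x \in Aset S -> x \in XE.
  by move=> x; rewrite inE => /and3P[].
have disj : [disjoint Nset & Aset S].
  apply/pred0P => x /=; apply/negbTE/negP => /andP[xN xA].
  by move: (XE_notN (AXE _ xA)); rewrite xN.
have cardU : #|Nset :|: Aset S| = #|Nset| + #|Aset S|.
  by rewrite cardsU (disjoint_setI0 disj) cards0 subn0.
have out : forall x, x \in Nset :|: Aset S -> x \notin Q S ->
    [/\ x \in Nset, rep (twin_class eG x) \in Q S :&: I,
        true_twin eG x (rep (twin_class eG x)) & rep (twin_class eG x) != x].
  move=> x; rewrite in_setU => /orP[xN|/AQ -> //] xQ.
  move: (xN); rewrite {1}NsetE => /and3P[xI xT nr].
  have /setIP[rI rC] := repP xI xT.
  have tw : true_twin eG x (rep (twin_class eG x)) by rewrite -in_twin_class.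
  have rQ : rep (twin_class eG x) \in Q S.
    by move: (twinQ gS tw nr); rewrite (negbTE xQ).
  split; [exact: xN | by rewrite in_setI rQ rI | exact: tw | by rewrite eq_sym].
have cross : forall x y, x \in Nset :|: Aset S -> y \in Nset :|: Aset S ->
    x \in Q S -> y \notin Q S -> x <> rep (twin_class eG y).
  move=> x y hx hy xQ yQ exr.
  have [yN _ twy _] := out y hy yQ.
  rewrite -exr in twy.
  move: hx; rewrite in_setU => /orP[xN|xA].
    move: xN; rewrite NsetE => /and3P[_ _]; rewrite -(twin_class_eq twy) -exr.
    by rewrite eqxx.
  move: xA; rewrite inE => /and3P[_ _ /forallP /(_ y) /implyP]; rewrite yN (twin_sym twy).
  by move=> /(_ isT); rewrite (negbTE yQ).
have inj : {in Nset :|: Aset S &, injective phi}.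
  move=> x y hx hy; rewrite /phi.
  case: (boolP (x \in Q S)) => xQ; case: (boolP (y \in Q S)) => yQ //.
  - by move=> h; case: (cross x y hx hy xQ yQ).
  - by move=> h; case: (cross y x hy hx yQ xQ).
  move=> er.
  have [xN _ twx _] := out x hx xQ.
  have [yN _ twy _] := out y hy yQ.
  rewrite er in twx.
  have txy := twin_trans twx (twin_sym twy).
  case: (eqVneq x y) => // nxy.
  by have := twinQ gS txy nxy; rewrite (negbTE xQ) (negbTE yQ).
have sub : phi @: (Nset :|: Aset S) \subset Q S :&: I.
  apply/subsetP => _ /imsetP[x hx ->]; rewrite /phi.
  case: (boolP (x \in Q S)) => xQ; last by have [] := out x hx xQ.
  rewrite inE xQ /=; move: hx; rewrite in_setU => /orP[/Nset_I //| /AXE /XE_I //].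
by rewrite -cardU -(card_in_imset inj) subset_leq_card.
Qed.

Lemma missing_twin (S : {set P}) u : u \in XE -> u \notin Aset S ->
  exists2 u', true_twin eG u u' & u' \notin Q S.
Proof.
move=> uX; rewrite inE uX /= negb_and => /orP[uQ|].
  by exists u => //; exact: twin_refl.
move=> /forallPn[y]; rewrite negb_imply => /andP[/andP[_ tw] yQ].
by exists y.
Qed.

Arguments missing_twin [S u].

Lemma Aset_rho (S : {set P}) : local_metric_gen eP S ->
  (Aset S \subset XE) && [forall u, forall v, relR eG eH XE u v ==>
        [exists s in Aset S, dist eG s u != dist eG s v]].
Proof.
move=> gS; apply/andP; split.
  by apply/subsetP => x; rewrite inE => /andP[].
apply/forallP => u; apply/forallP => v; apply/implyP => /and4P[uX vX euv /forallP hw].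
have nuv : u != v by apply: contraTneq euv => ->; rewrite irrG.
have dself : forall x y, x != y -> dist eG x x != dist eG x y.
  move=> x y nxy; rewrite dist_refl eq_sym; apply/eqP => /dist0 exy.
  by rewrite exy eqxx in nxy.
case: (boolP (u \in Aset S)) => uA.
  by apply/existsP; exists u; rewrite uA dself.
case: (boolP (v \in Aset S)) => vA.
  by apply/existsP; exists v; rewrite vA eq_sym dself // eq_sym.
have [u' tu u'Q] := missing_twin uX uA.
have [v' tv v'Q] := missing_twin vX vA.
have ntw : ~~ true_twin eG u v.
  by apply/negP => /(XE_twin_eq uX vX) e; rewrite e eqxx in nuv.
have nvu' : v != u' by apply: contra ntw => /eqP ->.
have nuv' : u != v' by apply: contra ntw => /eqP ->; exact: twin_sym.
have nu'v' : u' != v'.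
  apply: contra ntw => /eqP e; rewrite e in tu; exact: twin_trans tu (twin_sym tv).
have eu'v : eG u' v.
  by move/twinP: (tu) => /(_ v); rewrite euv orbT (negbTE nvu') /= => <-.
have eu'v' : eG u' v'.
  move/twinP: (tv) => /(_ u'); rewrite (symG v u') eu'v orbT (negbTE nu'v') /=.
  by move=> h; rewrite symG -h.
have euv' : eG u v'.
  move/twinP: (tv) => /(_ u); rewrite (symG v u) euv orbT (negbTE nuv') /=.
  by move=> h; rewrite symG -h.
move: u'Q; rewrite inE negbK => /badP[a ha].
move: v'Q; rewrite inE negbK => /badP[b hb].
have [[c cS /negP[]]|[c cS /negP[]]|[w [wu' wv' wne d]]] := gen_edge a b gS eu'v'.
- exact: ha.
- exact: hb.
have wu : w != u.
  apply/eqP => ewu; subst w.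
  by rewrite (distG1 (twin_adj tu wu')) (distG1 euv') eqxx in d.
have wv : w != v.
  apply/eqP => ewv; subst w.
  by rewrite (distG1 (twin_adj tv wv')) (distG1 (_ : eG v u')) ?eqxx // symG in d.
have d' : dist eG w u != dist eG w v by rewrite (twinD tu wu wu') (twinD tv wv wv').
have wVE : w \in VE eG eH.
  case: (boolP (w \in VE eG eH)) => // wn.
  move: (hw w); rewrite in_setU in_set2 (negbTE wn) (negbTE wu) (negbTE wv) /=.
  by move/eqP => h; rewrite h eqxx in d'.
move: wVE; rewrite inE => /andP[wT el].
have wA : w \in Aset S.
  rewrite inE XE_eq in_setD NsetE (negbTE wT) andbF /= inE (edgeless_inG (neH w) el) /=.
  rewrite inE (edgeless_notbad el wne) /=.
  apply/forallP => y; apply/implyP => /andP[yN twy].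
  move: yN; rewrite NsetE => /and3P[_ yT _].
  case: (eqVneq w y) => [ewy|nwy]; first by rewrite ewy yT in wT.
  by rewrite (twin_TG twy nwy) in wT.
by apply/existsP; exists w; rewrite wA d'.
Qed.

Lemma sec_count (S : {set P}) u : local_metric_gen eP S ->
  ladim (eH u) + (u \in Q S :&: I) <= #|Sec S u|.
Proof.
move=> gS; have g := gen_sec u gS.
have le : ladim (eH u) <= #|Sec S u| := min_card_le g.
case: (boolP (u \in Q S :&: I)) => h; last by rewrite addn0.
rewrite addn1 ltn_neqAle le andbT; apply/eqP => eq.
move: h; rewrite !inE => /andP[nb uI].
move/forallP: uI => /(_ (Sec S u)) /implyP.
rewrite /local_adj_basis g -eq eqxx => /(_ isT) /existsP[v hv].
by move/negP: nb; apply; apply/existsP; exists v.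
Qed.

Arguments sec_count [S]. Arguments Aset_rho [S]. Arguments lower_count [S].

Lemma lower (S : {set P}) : local_metric_gen eP S ->
  \sum_u ladim (eH u) + #|Nset| + rho eG eH XE <= #|S|.
Proof.
move=> gS.
have r : rho eG eH XE <= #|Aset S| := min_card_le (Aset_rho gS).
rewrite card_Sec.
apply: (@leq_trans (\sum_u (ladim (eH u) + (u \in Q S :&: I)))); last first.
  by apply: leq_sum => u _; exact: sec_count.
rewrite big_split /= -card_as_sum -addnA leq_add2l.
exact: leq_trans (leq_add (leqnn _) r) (lower_count gS).
Qed.

Definition rhoP (A : {set VG}) := (A \subset XE) && [forall u, forall v, relR eG eH XE u v ==>
        [exists s in A, dist eG s u != dist eG s v]].

Lemma rho_ex : exists2 A0, rhoP A0 & #|A0| = rho eG eH XE.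
Proof.
rewrite /rho; apply: (@min_card_ex' _ _ XE) => /=.
apply/andP; split => //.
apply/forallP => u; apply/forallP => v; apply/implyP => /and4P[uX _ euv _].
apply/existsP; exists u; rewrite uX /= dist_refl eq_sym; apply/eqP => /dist0 e.
by rewrite e irrG in euv.
Qed.

Definition Bf u : {set H u} := xchoose (basis_ex (irrH u)).
Definition Gf u : {set H u} := xchoose (good_ex (irrH u) (symH u)).

Lemma notN_rep x : x \in I -> x \in TG eG -> x \notin Nset -> x = rep (twin_class eG x).
Proof. by move=> xI xT; rewrite NsetE xI xT /= negbK => /eqP. Qed.

Arguments notN_rep [x].

Lemma upper (A0 : {set VG}) : rhoP A0 ->
  exists2 S : {set P}, local_metric_gen eP S &
     #|S| = \sum_u ladim (eH u) + #|Nset| + #|A0|.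
Proof.
move=> /andP[hAX /forallP hA].
pose Q' := A0 :|: Nset.
have Q'I : forall u, u \in Q' -> u \in I.
  move=> u; rewrite in_setU => /orP[/(subsetP hAX) /XE_I //|/Nset_I //].
pose good u := (u \in Q') || (u \notin I).
pose Sf u := if good u then Gf u else Bf u.
have hG : forall u, [&& local_adj_gen (eH u) (Gf u), ~~ bad (eH u) (Gf u) &
                   (#|Gf u| == ladim (eH u) + in_classG (eH u))].
  by move=> u; exact: (xchooseP (good_ex (irrH u) (symH u))).
have hB : forall u, local_adj_gen (eH u) (Bf u) && (#|Bf u| == ladim (eH u)).
  by move=> u; exact: (xchooseP (basis_ex (irrH u))).
have Sf_gen : forall u, local_adj_gen (eH u) (Sf u).
  move=> u; rewrite /Sf; case: ifP => _.
    by case/and3P: (hG u).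
  by case/andP: (hB u).
have Sf_good : forall u, good u -> ~~ bad (eH u) (Sf u).
  by move=> u gu; rewrite /Sf gu; case/and3P: (hG u).
have Sf_card : forall u, #|Sf u| = ladim (eH u) + (u \in Q').
  move=> u; rewrite /Sf /good; case: (boolP (u \in Q')) => uQ /=.
    case/and3P: (hG u) => _ _ /eqP ->; have := Q'I _ uQ; by rewrite inE => ->.
  case: (boolP (u \in I)) => uI /=.
    by case/andP: (hB u) => _ /eqP ->; rewrite addn0.
  case/and3P: (hG u) => _ _ /eqP ->.
  by move: uI; rewrite inE => /negbTE ->; rewrite addn0.
have Sf_ne : forall u, good u || ~~ edgeless (eH u) -> Sf u != set0.
  move=> u /orP[gu|].
    exact: (notbad_ne (neH u) (Sf_good u gu)).
  move=> /forallPn[a] /forallPn[b]; rewrite negbK => eab.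
  have [c cS _] := lag_edge (Sf_gen u) eab.
  by apply/set0Pn; exists c.
pose S := [set x : P | tagged x \in Sf (tag x)].
have mem : forall u (c : H u), (Tg c \in S) = (c \in Sf u).
  by move=> u c; rewrite inE.
exists S; last first.
  rewrite card_sigma; under eq_bigr do rewrite Sf_card.
  rewrite big_split /= -card_as_sum -addnA; congr (_ + _).
  rewrite cardsU addnC; suff -> : #|A0 :&: Nset| = 0 by rewrite subn0.
  apply/eqP; rewrite cards_eq0; apply/eqP/setP => x; rewrite !inE.
  apply/negbTE/negP => /andP[/(subsetP hAX) /XE_notN xN xN'].
  by rewrite xN' in xN.
apply/forallP => -[u a]; apply/forallP => -[v b]; apply/implyP.
case: (eqVneq u v) => [?|nuv].
  subst v; rewrite lexS => eab.
  have [c cS d] := lag_edge (Sf_gen u) eab.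
  apply/existsP; exists (Tg c); rewrite mem cS /= !distS.
  rewrite !dist2S in d; by apply: contra d => /eqP [->].
rewrite lexD // => euv.
have common : forall w (c : H w), w != u -> w != v -> c \in Sf w ->
    dist eG w u != dist eG w v ->
    [exists s in S, dist eP s (Tg a) != dist eP s (Tg b)].
  move=> w c wu wv cS d; apply/existsP; exists (Tg c); rewrite mem cS /=.
  by rewrite !distD.
case: (boolP (good u)) => gu.
  have [c cS nac] := notbadP a (Sf_good u gu).
  apply/existsP; exists (Tg c); rewrite mem cS /=.
  rewrite (distP1 (_ : eP (Tg c) (Tg b))) ?lexD // distS.
  case: (eqVneq c a) => // nca.
  by rewrite symH (negbTE nac).
case: (boolP (good v)) => gv.
  have [c cS nbc] := notbadP b (Sf_good v gv).
  apply/existsP; exists (Tg c); rewrite mem cS /=.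
  have ecb : eP (Tg c) (Tg a) by rewrite lexD 1?eq_sym // symG.
  rewrite (distP1 ecb) distS eq_sym.
  case: (eqVneq c b) => // ncb.
  by rewrite symH (negbTE nbc).
move: gu gv; rewrite /good !negb_or !negbK => /andP[uQ uI] /andP[vQ vI].
move: uQ vQ; rewrite !in_setU !negb_or => /andP[uA uN] /andP[vA vN].
have uX : u \in XE by rewrite XE_eq in_setD uN uI.
have vX : v \in XE by rewrite XE_eq in_setD vN vI.
suff [w [wu wv wne d]] : exists w, [/\ w != u, w != v, Sf w != set0 &
                                   dist eG w u != dist eG w v].
  by have [c cS] := set0Pn _ wne; exact: common wu wv cS d.
case: (boolP (relR eG eH XE u v)) => hR.
  move/forallP: (hA u) => /(_ v) /implyP /(_ hR) /existsP[s /andP[sA d]].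
  exists s; split => //.
  - by apply: contraTneq sA => ->.
  - by apply: contraTneq sA => ->.
  by apply: Sf_ne; rewrite /good in_setU sA.
move: hR; rewrite /relR uX vX euv /= => /forallPn[w].
rewrite negb_imply in_setU in_set2 !negb_or => /andP[/and3P[wVE wu wv] d].
case: (boolP (edgeless (eH w))) => el; last first.
  by exists w; split => //; apply: Sf_ne; rewrite el orbT.
have wT : w \in TG eG.
  by move: wVE; rewrite inE el andbT negbK.
have wI : w \in I by rewrite inE (edgeless_inG (neH w) el).
case: (eqVneq w (rep (twin_class eG w))) => er; last first.
  exists w; split => //; apply: Sf_ne.
  by rewrite /good in_setU NsetE wI wT er orbT.
have [y twy nyw] := TG_twin wT.
have cls : twin_class eG y = twin_class eG w by rewrite (twin_class_eq twy).
have ny : forall x, x \in I -> x \notin Nset -> x != w -> y != x.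
  move=> x xI xN nxw; apply/eqP => eyx; subst x.
  have yT : y \in TG eG by apply: (twin_TG (twin_sym twy)).
  have := notN_rep xI yT xN; rewrite cls -er => eyw.
  by rewrite eyw eqxx in nxw.
have yu : y != u by apply: ny; rewrite // eq_sym.
have yv : y != v by apply: ny; rewrite // eq_sym.
exists y; split => //.
  apply: Sf_ne; rewrite /good; case: (boolP (y \in I)) => yI; rewrite ?orbT //.
  rewrite in_setU NsetE yI (twin_TG (twin_sym twy) nyw) /= cls -er nyw.
  by rewrite orbT.
rewrite (dist_sym _ _ symG y u) (dist_sym _ _ symG y v).
rewrite -(twinD twy (_ : u != w) (_ : u != y)) ?(eq_sym u) //.
rewrite -(twinD twy (_ : v != w) (_ : v != y)) ?(eq_sym v) //.
by rewrite -(dist_sym _ _ symG w u) -(dist_sym _ _ symG w v).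
Qed.

Lemma main_eq :
  ldim eP = \sum_(i : VG) ladim (eH i)
    + \sum_(U in C | I :&: U != set0) (#|I :&: U| - 1)
    + rho eG eH XE.
Proof.
rewrite sumN; apply/eqP; rewrite eqn_leq; apply/andP; split.
  have [A0 hA0 cA0] := rho_ex.
  have [S gS cS] := upper _ hA0.
  by rewrite -cA0 -cS; exact: min_card_le gS.
have [S gS cS] := min_card_ex' (setT_lmg eP_irr).
by rewrite /ldim -cS; exact: lower _ gS.
Qed.

End Main.


Theorem theorem2 (VG : finType) (eG : rel VG) (H : VG -> finType)
    (eH : forall i, rel (H i)) (rep : {set VG} -> VG) :
  symmetric eG -> irreflexive eG ->
  (forall i, symmetric (eH i)) -> (forall i, irreflexive (eH i)) ->
  (forall i, 0 < #|H i|) ->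
  2 <= #|VG| ->
  connected eG ->
  (forall U, U \in nstwin_classes eG -> Iset eH :&: U != set0 ->
     rep U \in Iset eH :&: U) ->
  ldim (lexprod eG eH) =
    \sum_(i : VG) ladim (eH i)
    + \sum_(U in nstwin_classes eG | Iset eH :&: U != set0)
         (#|Iset eH :&: U| - 1)
    + rho eG eH (XE_of eG eH rep).
Proof.
move=> symG irrG symH irrH neH card2 conG hrep.
by apply: main_eq.
Qed.
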